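(* For all positive integers $m,n,t,a$ with $m+n=t$, we have $\mathcal{F}(a,t)<\mathcal{F}(a,m,n)$.
   Context: $\mathcal{F}$ is defined on finite tuples of positive integers recursively: $\mathcal{F}(a)=1$ for every positive integer $a$; for $s\ge2$, $\mathcal{F}(a_1,\dots,a_s)=\sum_{i=1}^s\mathcal{F}(a_1,\dots,a_{i-1},a_i-1,a_{i+1},\dots,a_s)$, where a tuple with a zero entry is reduced by: $\mathcal{F}(0,a_2,\dots,a_t)=\mathcal{F}(a_2,\dots,a_t)$, $\mathcal{F}(a_1,\dots,a_t,0)=\mathcal{F}(a_1,\dots,a_t)$, and $\mathcal{F}(a_1,\dots,a_r,0,a_{r+2},\dots,a_s)=\mathcal{F}(a_1,\dots,a_{r-1},a_r+a_{r+2},a_{r+3},\dots,a_s)$. *)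

(* Defs.v *)
From mathcomp Require Import all_boot.
Set Implicit Arguments. Unset Strict Implicit. Unset Printing Implicit Defensive.

(* [reduce0 pre post]: the reduction of the tuple pre ++ [0] ++ post,
   following the paper's rules:
   F(0,a_2,..,a_t) = F(a_2,..,a_t); F(a_1,..,a_t,0) = F(a_1,..,a_t);
   F(a_1,..,a_r,0,a_{r+2},..,a_s) = F(a_1,..,a_{r-1},a_r+a_{r+2},a_{r+3},..,a_s). *)
Definition reduce0 (pre post : seq nat) : seq nat :=
  match pre, post with
  | [::], _ => post
  | _, [::] => pre
  | x :: pre', y :: post' => belast x pre' ++ (last x pre' + y) :: post'
  end.

Definition dec_at (i : nat) (l : seq nat) : seq nat :=
  let pre := take i l in
  let x := nth 0 l i in
  let post := drop i.+1 l in
  if x.-1 == 0 then reduce0 pre post else pre ++ x.-1 :: post.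

Fixpoint Ffuel (k : nat) (l : seq nat) : nat :=
  match k with
  | 0 => 0
  | k'.+1 =>
      match l with
      | [:: _] => 1
      | _ => \sum_(0 <= i < size l) Ffuel k' (dec_at i l)
      end
  end.

(* F(a_1,...,a_s), for positive entries: every recursive step lowers the
   entry sum by exactly one, so fuel = sum of the entries suffices. *)
Definition F (l : seq nat) : nat := Ffuel (sumn l) l.

(* Main.v *)
Require Import Defs.
From mathcomp Require Import all_boot zify.

Lemma Ffuel2 k x y : Ffuel k.+1 [:: x; y] =
  Ffuel k (dec_at 0 [:: x; y]) + Ffuel k (dec_at 1 [:: x; y]).
Proof. by rewrite [LHS]/= !big_nat_recl // big_geq // addn0. Qed.

Lemma Ffuel3 k x y z : Ffuel k.+1 [:: x; y; z] =
  Ffuel k (dec_at 0 [:: x; y; z]) + Ffuel k (dec_at 1 [:: x; y; z])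
  + Ffuel k (dec_at 2 [:: x; y; z]).
Proof. by rewrite [LHS]/= !big_nat_recl // big_geq // addn0 addnA. Qed.

Lemma dec0_2 a y : dec_at 0 [:: a.+1; y] = if a is a'.+1 then [:: a; y] else [:: y].
Proof. by case: a. Qed.
Lemma dec1_2 x b : dec_at 1 [:: x; b.+1] = if b is b'.+1 then [:: x; b] else [:: x].
Proof. by case: b. Qed.
Lemma dec0_3 a y z : dec_at 0 [:: a.+1; y; z] = if a is a'.+1 then [:: a; y; z] else [:: y; z].
Proof. by case: a. Qed.
Lemma dec1_3 x m z : dec_at 1 [:: x; m.+1; z] = if m is m'.+1 then [:: x; m; z] else [:: x + z].
Proof. by case: m. Qed.
Lemma dec2_3 x y n : dec_at 2 [:: x; y; n.+1] = if n is n'.+1 then [:: x; y; n] else [:: x; y].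
Proof. by case: n. Qed.

Lemma F2E a b : F [:: a.+1; b.+1] =
  (if a is a'.+1 then F [:: a; b.+1] else 1) + (if b is b'.+1 then F [:: a.+1; b] else 1).
Proof.
rewrite {1}/F.
have -> : sumn [:: a.+1; b.+1] = (a+b+1).+1 by rewrite /=; lia.
rewrite Ffuel2 dec0_2 dec1_2.
congr (_ + _).
  case: a => [|a]; first by rewrite add0n addn1.
  by rewrite /F; congr Ffuel; rewrite /=; lia.
case: b => [|b]; first by rewrite addn0 addn1.
by rewrite /F; congr Ffuel; rewrite /=; lia.
Qed.

Lemma F3E a m n : F [:: a.+1; m.+1; n.+1] =
  (if a is a'.+1 then F [:: a; m.+1; n.+1] else F [:: m.+1; n.+1])
  + (if m is m'.+1 then F [:: a.+1; m; n.+1] else 1)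
  + (if n is n'.+1 then F [:: a.+1; m.+1; n] else F [:: a.+1; m.+1]).
Proof.
rewrite {1}/F.
have -> : sumn [:: a.+1; m.+1; n.+1] = (a+m+n+2).+1 by rewrite /=; lia.
rewrite Ffuel3 dec0_3 dec1_3 dec2_3.
congr (_ + _ + _).
- case: a => [|a]; rewrite /F; congr Ffuel; rewrite /=; lia.
- case: m => [|m]; last by rewrite /F; congr Ffuel; rewrite /=; lia.
  have -> : a + 0 + n + 2 = (a + n.+1 + 1) by lia. by rewrite addn1.
- case: n => [|n]; rewrite /F; congr Ffuel; rewrite /=; lia.
Qed.

Lemma F2C a b : F [:: a.+1; b.+1] = 'C(a + b + 2, a.+1).
Proof.
elim: (a + b) {-2}a {-2}b (leqnn (a + b)) => [|k IH] {}a {}b H.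
  have -> : a = 0 by lia. have -> : b = 0 by lia. by rewrite F2E.
rewrite F2E.
have -> : a + b + 2 = (a + b + 1).+1 by lia.
rewrite binS addnC.
congr (_ + _).
  case: b H => [|b] H; first by rewrite addn0 addn1 binn.
  rewrite IH; last lia. congr binomial; lia.
case: a H => [|a] H; first by rewrite bin0.
rewrite IH; last lia. congr binomial; lia.
Qed.

Lemma F3C a m n : 'C(a + m + n + 3, a.+1) < F [:: a.+1; m.+1; n.+1].
Proof.
elim: (a + m + n) {-2}a {-2}m {-2}n (leqnn (a + m + n)) => [|k IH] {}a {}m {}n H.
  have -> : a = 0 by lia. have -> : m = 0 by lia. have -> : n = 0 by lia.
  by rewrite F3E F2C.
rewrite F3E.
have -> : a + m + n + 3 = (a + m + n + 2).+1 by lia.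
rewrite binS.
have T0 : 'C(a + m + n + 2, a) <=
   (if a is a'.+1 then F [:: a; m.+1; n.+1] else F [:: m.+1; n.+1]).
  case: a H => [|a] H.
    by rewrite bin0 F2C bin_gt0; lia.
  apply: ltnW. have := IH a m n ltac:(lia). congr (_ < _); congr binomial; lia.
have T1 : 0 < (if m is m'.+1 then F [:: a.+1; m; n.+1] else 1).
  case: m H T0 => [|m] H _ //.
  exact: leq_ltn_trans (IH a m n ltac:(lia)).
have T2 : 'C(a + m + n + 2, a.+1) <=
   (if n is n'.+1 then F [:: a.+1; m.+1; n] else F [:: a.+1; m.+1]).
  case: n H T0 T1 => [|n] H _ _.
    by rewrite F2C addn0.
  apply: ltnW. have := IH a m n ltac:(lia). congr (_ < _); congr binomial; lia.
lia.
Qed.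

Theorem proposition4 (m n t a : nat) :
  0 < m -> 0 < n -> 0 < t -> 0 < a -> m + n = t ->
  F [:: a; t] < F [:: a; m; n].
Proof.
case: m => // m _; case: n => // n _; case: t => // t _; case: a => // a _ Ht.
rewrite F2C.
have := F3C a m n. congr (_ < _). congr binomial. lia.
Qed.
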